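(* If $\gamma=0$, then for $u_1,\dots,u_n\in\mathcal B$, $R_n[X(u_1),\dots,X(u_n)]=\langle a^-(u_1)a^0(u_2)\cdots a^0(u_{n-1})a^+(u_n)\Omega,\Omega\rangle_{\gamma,\phi}$.
   Context: Let $\mathcal B$ be a unital $*$-algebra with star-linear maps $\phi:\mathcal B\to\mathbb C$, $\gamma:\mathcal B\to\mathcal B$, $\Lambda:\mathcal B\otimes_{alg}\mathcal B\to\mathcal B$, where $\phi$ is positive and faithful and $\gamma+\phi$ is completely positive, with $(\gamma+\phi)[b]:=\gamma[b]+\phi[b]1_{\mathcal B}$. Assume $\phi[v^*\Lambda(b\otimes u)]=\phi[\Lambda(b^*\otimes v)^*u]$ and $\gamma[v^*\Lambda(b\otimes u)]=\gamma[\Lambda(b^*\otimes v)^*u]$ for all $b,u,v$. On $\mathcal F_{alg}(\mathcal B)=\mathbb C\Omega\oplus\bigoplus_{n\ge1}\mathcal B^{\otimes n}$ use the form $\langle\Omega,\Omega\rangle_{\gamma,\phi}=1$, $\langle u_1\otimes\cdots\otimes u_n,v_1\otimes\cdots\otimes v_k\rangle_{\gamma,\phi}=\delta_{n=k}\phi[v_n^*(\gamma+\phi)[v_{n-1}^*\cdots(\gamma+\phi)[v_1^*u_1]\cdots u_{n-1}]u_n]$. For $b\in\mathcal B$: $a^+(b)\Omega=b$, $a^+(b)(u_1\otimes\cdots\otimes u_n)=b\otimes u_1\otimes\cdots\otimes u_n$; $a^-(b)\Omega=0$, $a^-(b)u_1=\phi[bu_1]\Omega$, $a^-(b)(u_1\otimes\cdots\otimes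 u_n)=(\gamma+\phi)[bu_1]u_2\otimes\cdots\otimes u_n$ ($n\ge2$); $a^0(b)\Omega=0$, $a^0(b)(u_1\otimes\cdots\otimes u_n)=\Lambda(b\otimes u_1)\otimes u_2\otimes\cdots\otimes u_n$; $X(b)=a^+(b)+a^-(b)+a^0(b)$. Free cumulants $R_k$ with respect to $\psi(A)=\langle A\Omega,\Omega\rangle_{\gamma,\phi}$ are defined by $\psi[Y_1\cdots Y_n]=\sum_{\pi\in\mathrm{NC}(n)}\prod_{V\in\pi}R_{|V|}[Y_{V(1)},\dots,Y_{V(|V|)}]$, $\mathrm{NC}(n)$ the noncrossing partitions of $\{1,\dots,n\}$. *)

(* Defs.v *)
From HB Require Import structures.
From mathcomp Require Import all_boot all_order all_algebra.
From mathcomp Require Export reals complex.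
Set Implicit Arguments. Unset Strict Implicit. Unset Printing Implicit Defensive.
Import Order.TTheory GRing.Theory Num.Theory.
Local Open Scope ring_scope.

Definition is_star_algebra (C : numClosedFieldType) (B : algType C) (star : B -> B) :=
  [/\ forall x, star (star x) = x,
      forall (a : C) (x y : B), star (a *: x + y) = a^* *: star x + star y
    & forall x y : B, star (x * y) = star y * star x].

Definition star_linear_functional (C : numClosedFieldType) (B : algType C)
    (star : B -> B) (phi : B -> C) :=
  (forall (a : C) (x y : B), phi (a *: x + y) = a * phi x + phi y) /\
  (forall x, phi (star x) = (phi x)^*).

Definition star_linear_map (C : numClosedFieldType) (B : algType C)
    (star : B -> B) (T : B -> B) :=
  (forall (a : C) (x y : B), T (a *: x + y) = a *: T x + T y) /\
  (forall x, T (star x) = star (T x)).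

(* Lambda : B (x)_alg B -> B, given through its (bilinear) restriction to
   elementary tensors Lam b c = Lambda (b (x) c); star-linearity w.r.t. the
   involution (b (x) c)^* = b^* (x) c^* on B (x) B. *)
Definition star_linear_bimap (C : numClosedFieldType) (B : algType C)
    (star : B -> B) (Lam : B -> B -> B) :=
  [/\ forall (a : C) (x y z : B), Lam (a *: x + y) z = a *: Lam x z + Lam y z,
      forall (a : C) (x y z : B), Lam z (a *: x + y) = a *: Lam z x + Lam z y
    & forall x y, star (Lam x y) = Lam (star x) (star y)].

Definition positive_functional (C : numClosedFieldType) (B : algType C)
    (star : B -> B) (phi : B -> C) := forall b, 0 <= phi (star b * b).

Definition faithful_functional (C : numClosedFieldType) (B : algType C)
    (star : B -> B) (phi : B -> C) := forall b, phi (star b * b) = 0 -> b = 0.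

Definition positive_elt (C : numClosedFieldType) (B : algType C)
    (star : B -> B) (x : B) := exists s : seq B, x = \sum_(c <- s) star c * c.

Definition gp (C : numClosedFieldType) (B : algType C)
    (phi : B -> C) (gamma : B -> B) (b : B) : B := gamma b + phi b *: 1.

Definition completely_positive (C : numClosedFieldType) (B : algType C)
    (star : B -> B) (T : B -> B) :=
  forall (n : nat) (b c : 'I_n -> B),
    positive_elt star
      (\sum_(i < n) \sum_(j < n) star (c i) * T (star (b i) * b j) * c j).

Definition Lambda_symmetric (C : numClosedFieldType) (B : algType C)
    (star : B -> B) (Lam : B -> B -> B) (f : B -> B) :=
  forall b u v : B, f (star v * Lam b u) = f (star (Lam (star b) v) * u).

Definition Lambda_symmetric_fun (C : numClosedFieldType) (B : algType C)
    (star : B -> B) (Lam : B -> B -> B) (f : B -> C) :=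
  forall b u v : B, f (star v * Lam b u) = f (star (Lam (star b) v) * u).

(* A vector of F_alg(B) is represented by a formal finite linear combination
   of elementary tensors: (c, [:: u_1; ...; u_n]) stands for
   c (u_1 (x) ... (x) u_n), and the empty word stands for Omega. *)
Definition fock (C : numClosedFieldType) (B : algType C) := seq (C * seq B).
Definition op (C : numClosedFieldType) (B : algType C) := fock B -> fock B.

Definition Omega (C : numClosedFieldType) (B : algType C) : fock B := [:: (1, [::])].

(* linear extension of an action on elementary tensors *)
Definition lift_op (C : numClosedFieldType) (B : algType C)
    (f : seq B -> fock B) : op B :=
  fun v => flatten [seq [seq (t.1 * s.1, s.2) | s <- f t.2] | t <- v].

Definition aplus_w (C : numClosedFieldType) (B : algType C) (b : B) (w : seq B) : fock B :=
  [:: (1, b :: w)].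

Definition aminus_w (C : numClosedFieldType) (B : algType C)
    (phi : B -> C) (gamma : B -> B) (b : B) (w : seq B) : fock B :=
  match w with
  | [::] => [::]
  | [:: u1] => [:: (phi (b * u1), [::])]
  | u1 :: u2 :: r => [:: (1, (gp phi gamma (b * u1) * u2) :: r)]
  end.

Definition azero_w (C : numClosedFieldType) (B : algType C)
    (Lam : B -> B -> B) (b : B) (w : seq B) : fock B :=
  match w with
  | [::] => [::]
  | u1 :: r => [:: (1, Lam b u1 :: r)]
  end.

Definition aplus (C : numClosedFieldType) (B : algType C) (b : B) : op B :=
  lift_op (aplus_w b).
Definition aminus (C : numClosedFieldType) (B : algType C)
    (phi : B -> C) (gamma : B -> B) (b : B) : op B :=
  lift_op (aminus_w phi gamma b).
Definition azero (C : numClosedFieldType) (B : algType C)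
    (Lam : B -> B -> B) (b : B) : op B :=
  lift_op (azero_w Lam b).

(* X(b) = a^+(b) + a^-(b) + a^0(b)   (concatenation = sum of formal sums) *)
Definition Xop (C : numClosedFieldType) (B : algType C)
    (phi : B -> C) (gamma : B -> B) (Lam : B -> B -> B) (b : B) : op B :=
  fun v => aplus b v ++ aminus phi gamma b v ++ azero Lam b v.

(* <u_1 .. u_n, v_1 .. v_k> = delta_{n=k}
     phi[v_n^* (g+p)[v_{n-1}^* ... (g+p)[v_1^* u_1] ... u_{n-1}] u_n],
   and <Omega, Omega> = 1 *)
Definition word_form (C : numClosedFieldType) (B : algType C)
    (star : B -> B) (phi : B -> C) (gamma : B -> B) (u v : seq B) : C :=
  if size u != size v then 0 else
  match u, v with
  | u1 :: us, v1 :: vs =>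
      phi (foldl (fun x p => star p.2 * gp phi gamma x * p.1)
                 (star v1 * u1) (zip us vs))
  | _, _ => 1
  end.

Definition fock_form (C : numClosedFieldType) (B : algType C)
    (star : B -> B) (phi : B -> C) (gamma : B -> B) (x y : fock B) : C :=
  \sum_(s <- x) \sum_(t <- y) s.1 * (t.1)^* * word_form star phi gamma s.2 t.2.

Definition psi (C : numClosedFieldType) (B : algType C)
    (star : B -> B) (phi : B -> C) (gamma : B -> B) (A : op B) : C :=
  fock_form star phi gamma (A (Omega B)) (Omega B).

(* operator product Y_1 Y_2 ... Y_n (Y_n acts first) *)
Definition prod_op (C : numClosedFieldType) (B : algType C) (s : seq (op B)) : op B :=
  foldr (fun f g => f \o g) id s.

Definition noncrossing (n : nat) (P : {set {set 'I_n}}) : bool :=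
  ~~ [exists V in P, exists W in P, exists a : 'I_n, exists b : 'I_n,
        exists c : 'I_n, exists d : 'I_n,
        [&& V != W, (a < b)%N, (b < c)%N, (c < d)%N,
            a \in V, c \in V, b \in W & d \in W]].

Definition NCpart (n : nat) (P : {set {set 'I_n}}) : bool :=
  partition P [set: 'I_n] && noncrossing P.

(* Rc : seq (op B) -> C is the family of free cumulants (R_k applied to a list
   of length k) of the functional ps: the moment-cumulant relation
   ps[Y_1 ... Y_n] = sum_{pi in NC(n)} prod_{V in pi} R_{|V|}[Y_V] holds. *)
Definition free_cumulants (C : numClosedFieldType) (B : algType C)
    (ps : op B -> C) (Rc : seq (op B) -> C) :=
  forall (n : nat) (Y : 'I_n -> op B),
    ps (prod_op [seq Y i | i <- enum 'I_n]) =
    \sum_(P : {set {set 'I_n}} | NCpart P) \prod_(V in P) Rc [seq Y i | i <- enum V].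

(* Main.v *)
Require Import Defs.
From HB Require Import structures.
From mathcomp Require Import all_boot all_order all_algebra.
From mathcomp Require Import reals complex.
From Stdlib Require Import FunctionalExtensionality.
From mathcomp Require Import zify.
Set Implicit Arguments. Unset Strict Implicit. Unset Printing Implicit Defensive.
Import Order.TTheory GRing.Theory Num.Theory.
Local Open Scope ring_scope.
Fixpoint trv (C : numClosedFieldType) (B : algType C) (phi : B -> C) (Lam : B -> B -> B)
  (v s : seq B) : C :=
  match v with
  | [::] => if s is [::] then 1 else 0
  | b :: v' => trv phi Lam v' (b :: s)
      + (match s with [::] => 0 | [:: t] => phi (b * t) * trv phi Lam v' [::]
         | t :: t2 :: r => trv phi Lam v' ((phi (b * t) *: t2) :: r) end)
      + (match s with [::] => 0 | t :: r => trv phi Lam v' (Lam b t :: r) end)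
  end.

Definition vac (C : numClosedFieldType) (B : algType C) (star : B -> B) (phi : B -> C)
  (gamma : B -> B) (v : fock B) : C :=
  \sum_(s <- v) s.1 * word_form star phi gamma s.2 [::].

Lemma psi_vac (C : numClosedFieldType) (B : algType C) (star : B -> B) (phi : B -> C)
  (gamma : B -> B) (A : op B) : psi star phi gamma A = vac star phi gamma (A (Omega B)).
Proof.
rewrite /psi /fock_form /vac; apply: eq_bigr => s _.
by rewrite big_cons big_nil addr0 /= conjC1 mulr1.
Qed.

Lemma word_form_nil (C : numClosedFieldType) (B : algType C) (star : B -> B) (phi : B -> C)
  (gamma : B -> B) (s : seq B) :
  word_form star phi gamma s [::] = if s is [::] then 1 else 0.
Proof. by case: s. Qed.

Lemma prod_op_rcons (C : numClosedFieldType) (B : algType C) (L : seq (op B)) (f : op B) v :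
  prod_op (rcons L f) v = prod_op L (f v).
Proof. by elim: L v => [|g L IH] v //=; rewrite IH. Qed.

Lemma sum_lift (C : numClosedFieldType) (B : algType C) (g : seq B -> fock B)
  (H : seq B -> C) (v : fock B) :
  \sum_(q <- lift_op g v) q.1 * H q.2 = \sum_(t <- v) t.1 * \sum_(q <- g t.2) q.1 * H q.2.
Proof.
elim: v => [|t v IH]; first by rewrite /lift_op /= !big_nil.
rewrite /lift_op /= big_cat /= -/(lift_op g v) IH big_cons big_map mulr_sumr.
by congr (_ + _); apply: eq_bigr => q _; rewrite mulrA.
Qed.

Lemma fock_trv (C : numClosedFieldType) (B : algType C) (star : B -> B) (phi : B -> C)
  (gamma : B -> B) (Lam : B -> B -> B) :
  (forall b, gamma b = 0) ->
  forall w v, vac star phi gamma (prod_op (map (Xop phi gamma Lam) w) v)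
   = \sum_(t <- v) t.1 * trv phi Lam (rev w) t.2.
Proof.
move=> g0; elim/last_ind => [|w b IH] v.
  by rewrite /vac; apply: eq_bigr => s _; rewrite word_form_nil.
rewrite map_rcons prod_op_rcons /vac -/(vac _ _ _ _) IH rev_rcons.
rewrite /Xop !big_cat /= !sum_lift.
rewrite -!big_split /=; apply: eq_bigr => t _.
rewrite -!mulrDr; congr (_ * _).
case: t.2 => [|x [|y r]] /=; rewrite !big_cons !big_nil /= ?mul1r ?addr0 ?add0r ?addrA //.
by rewrite /gp g0 add0r -scalerAl mul1r.
Qed.

Lemma psi_X (C : numClosedFieldType) (B : algType C) (star : B -> B) (phi : B -> C)
  (gamma : B -> B) (Lam : B -> B -> B) :
  (forall b, gamma b = 0) ->
  forall w, psi star phi gamma (prod_op (map (Xop phi gamma Lam) w)) = trv phi Lam (rev w) [::].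
Proof.
by move=> g0 w; rewrite psi_vac fock_trv // /Omega big_cons big_nil addr0 mul1r.
Qed.

Lemma azero_fold (C : numClosedFieldType) (B : algType C) (Lam : B -> B -> B) mid (c : C) y :
  prod_op (map (azero Lam) mid) [:: (c, [:: y])] = [:: (c, [:: foldr Lam y mid])].
Proof.
elim: mid => [|b mid IH] //=; rewrite IH /azero /lift_op /= mulr1 //.
Qed.

Lemma psi_rhs (C : numClosedFieldType) (B : algType C) (star : B -> B) (phi : B -> C)
  (gamma : B -> B) (Lam : B -> B -> B) u1 mid un :
  psi star phi gamma
      (prod_op (aminus phi gamma u1 :: rcons [seq azero Lam u | u <- mid] (aplus un)))
  = phi (u1 * foldr Lam un mid).
Proof.
rewrite psi_vac /= prod_op_rcons /aplus /lift_op /= mul1r -/(lift_op _ _).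
rewrite azero_fold.
by rewrite /vac /aminus /lift_op /= !big_cons !big_nil /= !mul1r mulr1 addr0.
Qed.
Fixpoint lfl (C : numClosedFieldType) (B : algType C) (Lam : B -> B -> B) (l : seq B) : B :=
  match l with [::] => 0 | [:: y] => y | y :: r => Lam y (lfl Lam r) end.

Definition Kw (C : numClosedFieldType) (B : algType C) (phi : B -> C) (Lam : B -> B -> B)
  (l : seq B) : C :=
  match l with a :: ((_ :: _) as l') => phi (a * lfl Lam l') | _ => 0 end.

Lemma lfl_cons (C : numClosedFieldType) (B : algType C) (Lam : B -> B -> B) a l :
  l != [::] -> lfl Lam (a :: l) = Lam a (lfl Lam l).
Proof. by case: l. Qed.

Lemma cat_nil_neq (T : eqType) (L : seq T) u (t : seq T) : L ++ u :: t != [::].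
Proof. by case: L. Qed.

Lemma lfl_merge (C : numClosedFieldType) (B : algType C) (Lam : B -> B -> B) L u t :
  lfl Lam (L ++ [:: u; t]) = lfl Lam (L ++ [:: Lam u t]).
Proof.
elim: L => [|a L IH] //.
by rewrite /= IH; case: L {IH}.
Qed.

Lemma Kw_cons (C : numClosedFieldType) (B : algType C) (phi : B -> C) (Lam : B -> B -> B) a l :
  l != [::] -> Kw phi Lam (a :: l) = phi (a * lfl Lam l).
Proof. by case: l. Qed.

Lemma Kw_merge (C : numClosedFieldType) (B : algType C) (phi : B -> C) (Lam : B -> B -> B) L u t :
  L != [::] -> Kw phi Lam (L ++ [:: u; t]) = Kw phi Lam (L ++ [:: Lam u t]).
Proof.
case: L => [|a L] // _.
by rewrite !cat_cons !(Kw_cons _ _ _ (cat_nil_neq _ _ _)) lfl_merge.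
Qed.

Lemma lin0 (C : numClosedFieldType) (V : lmodType C) (W : lmodType C) (f : V -> W) :
  (forall a x y, f (a *: x + y) = a *: f x + f y) -> f 0 = 0.
Proof.
move=> h; have := h 1 0 0; rewrite scaler0 addr0 scale1r => E.
by have := congr1 (fun x => x - f 0) E; rewrite subrr addrK.
Qed.

Lemma linZ (C : numClosedFieldType) (V : lmodType C) (W : lmodType C) (f : V -> W) :
  (forall a x y, f (a *: x + y) = a *: f x + f y) -> forall a x, f (a *: x) = a *: f x.
Proof. by move=> h a x; have := h a x 0; rewrite addr0 (lin0 h) addr0. Qed.

Lemma lfl_scale (C : numClosedFieldType) (B : algType C) (Lam : B -> B -> B) :
  (forall (a : C) (x y z : B), Lam z (a *: x + y) = a *: Lam z x + Lam z y) ->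
  forall L (c : C) y, lfl Lam (rcons L (c *: y)) = c *: lfl Lam (rcons L y).
Proof.
move=> hL; elim=> [|a L IH] c y //=.
case: L IH => [|b L] IH /=; first by rewrite (linZ (fun a' x' y' => hL a' x' y' a)).
by rewrite -(linZ (fun a' x' y' => hL a' x' y' a)) -IH.
Qed.

Lemma phiZ (C : numClosedFieldType) (B : algType C) (phi : B -> C) :
  (forall (a : C) (x y : B), phi (a *: x + y) = a * phi x + phi y) ->
  forall a x, phi (a *: x) = a * phi x.
Proof.
move=> h a x; have h0 : phi 0 = 0.
  have := h 1 0 0; rewrite scaler0 addr0 mul1r => E.
  by have := congr1 (fun x => x - phi 0) E; rewrite subrr addrK.
by have := h a x 0; rewrite addr0 h0 addr0.
Qed.

Lemma Kw_scale (C : numClosedFieldType) (B : algType C) (phi : B -> C) (Lam : B -> B -> B) :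
  (forall (a : C) (x y z : B), Lam z (a *: x + y) = a *: Lam z x + Lam z y) ->
  (forall (a : C) (x y : B), phi (a *: x + y) = a * phi x + phi y) ->
  forall L (c : C) y, Kw phi Lam (rcons L (c *: y)) = c * Kw phi Lam (rcons L y).
Proof.
move=> hL hp [|a L] c y; first by rewrite /= mulr0.
have ne : forall z, rcons L z != [::] by move=> z; case: L.
rewrite !Kw_cons // lfl_scale // -scalerAr (phiZ hp) //.
Qed.

Lemma lfl_fold (C : numClosedFieldType) (B : algType C) (Lam : B -> B -> B) mid un :
  lfl Lam (rcons mid un) = foldr Lam un mid.
Proof.
elim: mid => [|a mid IH] //=; rewrite -IH.
by case: mid {IH}.
Qed.
Definition smP (N : nat) (P : {set {set 'I_N}}) : rel 'I_N :=
  fun i j => pblock P i == pblock P j.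
Definition ncr (N : nat) (R : rel 'I_N) : bool :=
  [forall a : 'I_N, forall b : 'I_N, forall c : 'I_N, forall d : 'I_N,
    [&& (a < b)%N, (b < c)%N, (c < d)%N, R a c & R b d] ==> R a b].
Definition nosr (N : nat) (R : rel 'I_N) : bool :=
  [forall i : 'I_N, exists j : 'I_N, (j != i) && R i j].
Definition sdr (N m : nat) (R : rel 'I_N) : bool :=
  [forall i : 'I_N, forall j : 'I_N, [&& (N - m <= i)%N, (N - m <= j)%N & R i j] ==> (i == j)].
Definition samer (N p : nat) (R : rel 'I_N) : bool :=
  [exists i : 'I_N, exists j : 'I_N, [&& nat_of_ord i == p, nat_of_ord j == p.+1 & R i j]].
Definition morer (N p : nat) (R : rel 'I_N) : bool :=
  [exists i : 'I_N, exists j : 'I_N, [&& nat_of_ord i == p, nat_of_ord j != p, nat_of_ord j != p.+1 & R i j]].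
Definition condr (N m : nat) (R : rel 'I_N) : bool := [&& ncr R, nosr R & sdr m R].

Lemma ncrP (N : nat) (R : rel 'I_N) :
  reflect (forall a b c d : 'I_N, (a < b)%N -> (b < c)%N -> (c < d)%N -> R a c -> R b d -> R a b)
    (ncr R).
Proof.
apply: (iffP idP).
  move=> /forallP H a b c d ab bc cd ac bd.
  by move: (H a) => /forallP/(_ b)/forallP/(_ c)/forallP/(_ d)/implyP; apply; rewrite ab bc cd ac bd.
move=> H; apply/forallP=> a; apply/forallP=> b; apply/forallP=> c; apply/forallP=> d.
by apply/implyP=> /and5P[ab bc cd ac bd]; apply: (H a b c d).
Qed.

Lemma nosrP (N : nat) (R : rel 'I_N) :
  reflect (forall i : 'I_N, exists j : 'I_N, j != i /\ R i j) (nosr R).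
Proof.
apply: (iffP forallP) => H i.
  by have /existsP[j /andP[]] := H i; exists j.
by have [j [? ?]] := H i; apply/existsP; exists j; apply/andP.
Qed.

Lemma sdrP (N m : nat) (R : rel 'I_N) :
  reflect (forall i j : 'I_N, (N - m <= i)%N -> (N - m <= j)%N -> R i j -> i = j) (sdr m R).
Proof.
apply: (iffP forallP) => H i.
  by move=> j hi hj hr; move: (H i) => /forallP/(_ j)/implyP; rewrite hi hj hr => /(_ isT)/eqP.
by apply/forallP=> j; apply/implyP=> /and3P[hi hj hr]; apply/eqP; apply: H.
Qed.

Lemma samerP (N p : nat) (R : rel 'I_N) :
  reflect (exists i j : 'I_N, [/\ nat_of_ord i = p, nat_of_ord j = p.+1 & R i j]) (samer p R).
Proof.
apply: (iffP existsP).
  by move=> [i /existsP[j /and3P[/eqP ? /eqP ? ?]]]; exists i, j.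
by move=> [i [j [? ? ?]]]; exists i; apply/existsP; exists j; apply/and3P; split=> //; apply/eqP.
Qed.

Lemma morerP (N p : nat) (R : rel 'I_N) :
  reflect (exists i j : 'I_N, [/\ nat_of_ord i = p, nat_of_ord j <> p, nat_of_ord j <> p.+1 & R i j]) (morer p R).
Proof.
apply: (iffP existsP).
  by move=> [i /existsP[j /and4P[/eqP ? /eqP ? /eqP ? ?]]]; exists i, j.
move=> [i [j [? ? ? ?]]]; exists i; apply/existsP; exists j.
by apply/and4P; split=> //; apply/eqP.
Qed.

Definition PP (N : nat) (T : eqType) (f : 'I_N -> T) : {set {set 'I_N}} :=
  preim_partition f [set: 'I_N].

Lemma PP_part (N : nat) (T : eqType) (f : 'I_N -> T) : partition (PP f) [set: 'I_N].
Proof. exact: preim_partitionP. Qed.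

Lemma smP_PP (N : nat) (T : eqType) (f : 'I_N -> T) i j : smP (PP f) i j = (f i == f j).
Proof.
have /and3P[/eqP cov tI _] := PP_part f.
rewrite /smP eq_pblock // ?cov ?inE //.
rewrite /PP /preim_partition pblock_equivalence_partition ?inE //.
by move=> x y z _ _ _; split=> // /eqP->.
Qed.

Lemma smP_PPE (N : nat) (T : eqType) (f : 'I_N -> T) : smP (PP f) = (fun i j => f i == f j).
Proof. by apply: functional_extensionality => i; apply: functional_extensionality => j; apply: smP_PP. Qed.

Lemma PP_pblock (N : nat) (P : {set {set 'I_N}}) : partition P [set: 'I_N] -> PP (pblock P) = P.
Proof. exact: preim_partition_pblock. Qed.

Lemma PP_eq (N : nat) (T T' : eqType) (f : 'I_N -> T) (g : 'I_N -> T') :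
  (forall i j, (f i == f j) = (g i == g j)) -> PP f = PP g.
Proof.
move=> H; rewrite /PP /preim_partition /equivalence_partition.
by apply: eq_imset => x; apply/setP => y; rewrite !inE H.
Qed.

Lemma part_eq (N : nat) (P Q : {set {set 'I_N}}) :
  partition P [set: 'I_N] -> partition Q [set: 'I_N] -> (forall i j, smP P i j = smP Q i j) -> P = Q.
Proof. by move=> hP hQ H; rewrite -(PP_pblock hP) -(PP_pblock hQ); apply: PP_eq. Qed.

Lemma NCpartE (N : nat) (P : {set {set 'I_N}}) :
  NCpart P = partition P [set: 'I_N] && ncr (smP P).
Proof.
rewrite /NCpart; case hP: (partition P _) => //=.
have /and3P[/eqP cov tI _] := hP.
have mP : forall x, pblock P x \in P by move=> x; rewrite pblock_mem // cov inE.
have inP : forall x, x \in pblock P x by move=> x; rewrite mem_pblock cov inE.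
apply/idP/idP.
  move=> nc; apply/ncrP => a b c d ab bc cd ac bd; apply/negPn/negP => nab.
  move/negP: nc; apply; apply/existsP; exists (pblock P a); apply/andP; split => //.
  apply/existsP; exists (pblock P b); apply/andP; split => //.
  apply/existsP; exists a; apply/existsP; exists b; apply/existsP; exists c; apply/existsP; exists d.
  rewrite nab ab bc cd inP inP /=.
  move: ac bd; rewrite /smP eq_pblock ?cov ?inE // => ->.
  by rewrite eq_pblock ?cov ?inE.
move/ncrP => H; apply/negP => /existsP[V /andP[VP /existsP[W /andP[WP]]]].
move=> /existsP[a /existsP[b /existsP[c /existsP[d]]]].
move=> /and5P[VW ab bc cd /and4P[aV cV bW dW]].
have eV : forall x, x \in V -> pblock P x = V by move=> x; apply: def_pblock.
have eW : forall x, x \in W -> pblock P x = W by move=> x; apply: def_pblock.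
have := H a b c d ab bc cd; rewrite /smP (eV a) // (eV c) // (eW b) // (eW d) // !eqxx.
by move=> /(_ isT isT) /eqP E; rewrite E eqxx in VW.
Qed.

Definition ext (N M : nat) (rho : 'I_N -> option 'I_M) (P' : {set {set 'I_M}}) :=
  PP (fun i => omap (pblock P') (rho i)).
Definition restr (N M : nat) (e : 'I_M -> 'I_N) (P : {set {set 'I_N}}) :=
  PP (fun a => pblock P (e a)).

Lemma trans_sum (K : nmodType) (N M : nat) (e : 'I_M -> 'I_N) (rho : 'I_N -> option 'I_M)
  (Cd : rel 'I_N -> bool) (Cd' : rel 'I_M -> bool) (F : {set {set 'I_N}} -> K) :
  (forall a, rho (e a) = Some a) ->
  (forall P, partition P [set: 'I_N] -> Cd (smP P) ->
     forall i j, smP P i j = (omap (fun a => pblock P (e a)) (rho i)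
                              == omap (fun a => pblock P (e a)) (rho j))) ->
  (forall f : 'I_M -> {set 'I_M},
     Cd (fun i j => omap f (rho i) == omap f (rho j)) = Cd' (fun a b => f a == f b)) ->
  \sum_(P | partition P [set: 'I_N] && Cd (smP P)) F P
  = \sum_(P' | partition P' [set: 'I_M] && Cd' (smP P')) F (ext rho P').
Proof.
move=> Hre Hc HC.
rewrite (reindex_onto (ext rho) (restr e)).
  apply: eq_bigl => P'; rewrite /ext PP_part smP_PPE HC /=.
  case hP': (partition P' _); last first.
    rewrite /= [X in _ && X](_ : _ = false) ?andbF //; apply/negbTE/negP => /eqP E.
    by move: hP'; rewrite -E PP_part.
  rewrite /=; case: (Cd' _) => //=; apply/eqP; apply: part_eq => //; first exact: PP_part.
  move=> i j; rewrite /restr smP_PP.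
  by have := smP_PP (fun i0 => omap (pblock P') (rho i0)) (e i) (e j); rewrite /smP => ->; rewrite !Hre.
move=> P /andP[hP hC]; apply: part_eq => //; first exact: PP_part.
move=> i j; rewrite /ext smP_PP (Hc P hP hC i j).
case: (rho i) => [a|]; case: (rho j) => [b|] //=.
by have := smP_PP (fun a => pblock P (e a)) a b; rewrite /smP.
Qed.
Definition rho3 (M p : nat) (dd : 'I_M) (i : 'I_M.+1) : 'I_M :=
  insubd dd (if (i <= p)%N then nat_of_ord i else (nat_of_ord i).-1).
Definition e3 (M p : nat) (a : 'I_M) : 'I_M.+1 :=
  insubd ord0 (if (a < p)%N then nat_of_ord a else (nat_of_ord a).+1).

Lemma val_rho3 (M p : nat) (dd : 'I_M) (i : 'I_M.+1) :
  (p < M)%N -> nat_of_ord (rho3 p dd i) = if (i <= p)%N then nat_of_ord i else (nat_of_ord i).-1.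
Proof.
move=> hp; rewrite /rho3 val_insubd; have := ltn_ord i.
by case: (leqP i p) => h hi; rewrite ifT //; lia.
Qed.

Lemma val_e3 (M p : nat) (a : 'I_M) : nat_of_ord (e3 p a) = if (a < p)%N then nat_of_ord a else (nat_of_ord a).+1.
Proof.
rewrite /e3 val_insubd; have := ltn_ord a.
by case: (ltnP a p) => h hi; rewrite ifT //; lia.
Qed.

Lemma R3 (T : eqType) (p k : nat) (dd : 'I_(p + k.+1)) (R : rel 'I_(p + k.+1).+1)
  (f : 'I_(p + k.+1) -> T) :
  (forall i j, R i j = (f (rho3 p dd i) == f (rho3 p dd j))) ->
  [&& condr k.+1 R, samer p R & morer p R] = condr k.+1 (fun a b => f a == f b).
Proof.
move=> HR.
have hp : (p < p + k.+1)%N by lia.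
have vrE : forall i : 'I_(p + k.+1).+1, ((i <= p)%N /\ nat_of_ord (rho3 p dd i) = nat_of_ord i) \/
                               ((p < i)%N /\ nat_of_ord (rho3 p dd i) = (nat_of_ord i).-1).
  by move=> i; rewrite val_rho3 //; case: (leqP i p) => h; [left|right].
have veE : forall a : 'I_(p + k.+1), ((a < p)%N /\ nat_of_ord (e3 p a) = nat_of_ord a) \/
                            ((p <= a)%N /\ nat_of_ord (e3 p a) = (nat_of_ord a).+1).
  by move=> a; rewrite val_e3; case: (ltnP a p) => h; [left|right].
have re : forall a, rho3 p dd (e3 p a) = a.
  move=> a; apply: ord_inj.
  by case: (veE a) => [[h1 h2]|[h1 h2]]; case: (vrE (e3 p a)) => [[h3 h4]|[h3 h4]]; lia.
have emono : forall a b : 'I_(p + k.+1), (a < b)%N -> (e3 p a < e3 p b)%N.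
  by move=> a b h; case: (veE a) => [[h1 h2]|[h1 h2]]; case: (veE b) => [[h3 h4]|[h3 h4]]; lia.
have rmono : forall i j : 'I_(p + k.+1).+1, (i < j)%N -> (rho3 p dd i <= rho3 p dd j)%N.
  by move=> i j h; case: (vrE i) => [[h1 h2]|[h1 h2]]; case: (vrE j) => [[h3 h4]|[h3 h4]]; lia.
have slt : forall a b : 'I_(p + k.+1), (a <= b)%N -> a != b -> (a < b)%N.
  by move=> a b h1 h2; rewrite ltn_neqAle h1 andbT.
set p' : 'I_(p + k.+1) := Ordinal hp.
set p0 : 'I_(p + k.+1).+1 := widen_ord (leqnSn (p + k.+1)) p'.
have rp0 : rho3 p dd p0 = p'.
  apply: ord_inj; case: (vrE p0) => [[h1 h2]|[h1 h2]] /=; move: h1 h2 => /=; lia.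
apply/idP/idP.
- move=> /and3P[/and3P[/ncrP nc /nosrP ns /sdrP sd] sm /morerP mo]; apply/and3P; split.
  + apply/ncrP => a b c d ab bc cd fac fbd.
    have := nc (e3 p a) (e3 p b) (e3 p c) (e3 p d) (emono _ _ ab) (emono _ _ bc) (emono _ _ cd).
    by rewrite !HR !re; apply.
  + apply/nosrP => a; case: (eqVneq (nat_of_ord a) p) => hap.
    * have [i [j [hi hj hj2 Rij]]] := mo.
      exists (rho3 p dd j); split.
        apply/eqP => E; have := congr1 (@nat_of_ord _) E; case: (vrE j) => [[h1 h2]|[h1 h2]]; lia.
      rewrite HR in Rij; have -> : a = rho3 p dd i.
        by apply: ord_inj; case: (vrE i) => [[h1 h2]|[h1 h2]]; lia.
      done.
    * have [j [nji Rij]] := ns (e3 p a).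
      exists (rho3 p dd j); split; last by rewrite HR re in Rij.
      apply/eqP => E; move/eqP: nji; apply; apply: ord_inj.
      have := congr1 (@nat_of_ord _) E; case: (vrE j) => [[h1 h2]|[h1 h2]];
        case: (veE a) => [[h3 h4]|[h3 h4]]; lia.
  + apply/sdrP => a b ha hb fab.
    have := sd (e3 p a) (e3 p b); rewrite HR !re fab.
    move=> E; rewrite -(re a) -(re b) E //.
      by case: (veE a) => [[h3 h4]|[h3 h4]]; move: ha; lia.
    by case: (veE b) => [[h3 h4]|[h3 h4]]; move: hb; lia.
- move=> /and3P[/ncrP nc /nosrP ns /sdrP sd]; apply/and3P; split; [apply/and3P; split| |].
  + apply/ncrP => a b c d ab bc cd; rewrite !HR.
    have := rmono _ _ ab; have := rmono _ _ bc; have := rmono _ _ cd.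
    set A := rho3 p dd a; set B' := rho3 p dd b; set C' := rho3 p dd c; set D := rho3 p dd d.
    move=> mcd mbc mab hac hbd.
    case: (eqVneq A B') => [->//|nAB].
    case: (eqVneq B' C') => [E|nBC]; first by rewrite E.
    case: (eqVneq C' D) => [E|nCD].
      by rewrite -E in hbd; rewrite (eqP hac) (eqP hbd).
    by apply: (nc A B' C' D) => //; apply: slt.
  + apply/nosrP => i; have [b [nba fab]] := ns (rho3 p dd i).
    exists (e3 p b); split; last by rewrite HR re.
    by apply/eqP => E; move/eqP: nba; apply; rewrite -E re.
  + apply/sdrP => i j hi hj; rewrite HR => fij.
    have E := sd _ _ _ _ fij.
    have := E _ _; 
    case: (vrE i) => [[h1 h2]|[h1 h2]]; case: (vrE j) => [[h3 h4]|[h3 h4]];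
      (try by lia); move=> /(_ _ _)/(congr1 (@nat_of_ord _)) F; apply: ord_inj; move: F; rewrite ?h2 ?h4;
      (move=> F; (try (apply: F; lia)); lia).
  + apply/samerP; exists p0, (e3 p p'); split => //.
      by case: (veE p') => [[h1 h2]|[h1 h2]] /=; move: h1 h2 => /=; lia.
    by rewrite HR re rp0.
  + have [b [nb fb]] := ns p'; apply/morerP; exists p0, (e3 p b); split => //.
    * case: (veE b) => [[h1 h2]|[h1 h2]]; move/eqP: nb => nb; rewrite h2 => E;
        apply: nb; apply: ord_inj => /=; lia.
    * case: (veE b) => [[h1 h2]|[h1 h2]]; move/eqP: nb => nb; rewrite h2 => E;
        apply: nb; apply: ord_inj => /=; lia.
    * by rewrite HR re rp0.
Qed.
Definition rho2 (M p : nat) (i : 'I_M.+2) : option 'I_M :=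
  if (p <= i <= p.+1)%N then None
  else insub (if (i < p)%N then nat_of_ord i else (nat_of_ord i - 2)%N).
Arguments rho2 {M} p i.
Definition e2 (M p : nat) (a : 'I_M) : 'I_M.+2 :=
  insubd ord0 (if (a < p)%N then nat_of_ord a else (nat_of_ord a).+2).

Lemma rE2 (M p : nat) (i : 'I_M.+2) : (p <= M)%N ->
  ((p <= i <= p.+1)%N /\ rho2 p i = None) \/
  exists a : 'I_M, rho2 p i = Some a /\
    (((i < p)%N /\ nat_of_ord a = i) \/ ((p.+2 <= i)%N /\ nat_of_ord a = (i - 2)%N)).
Proof.
move=> hp; rewrite /rho2; case: ifP => h; first by left.
right; have := ltn_ord i; case: insubP => [a _ Ea|].
  by exists a; split => //; rewrite Ea; case: (ltnP i p) => h2; [left|right]; move: h; lia.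
by case: (ltnP i p) => h2 h3; move: h; lia.
Qed.

Arguments rE2 {M p} i _.

Lemma val_e2 (M p : nat) (a : 'I_M) :
  nat_of_ord (e2 p a) = if (a < p)%N then nat_of_ord a else (nat_of_ord a).+2.
Proof.
rewrite /e2 val_insubd; have := ltn_ord a.
by case: (ltnP a p) => h hi; rewrite ifT //; lia.
Qed.

Lemma R2 (T : eqType) (p k : nat) (R : rel 'I_(p + k).+2) (f : 'I_(p + k) -> T) :
  (forall i j, R i j = (omap f (rho2 p i) == omap f (rho2 p j))) ->
  [&& condr k.+1 R, samer p R & ~~ morer p R] = condr k (fun a b => f a == f b).
Proof.
move=> HR.
have hp : (p <= p + k)%N by lia.
have rE := fun i => rE2 i hp.
have veE : forall a : 'I_(p + k), ((a < p)%N /\ nat_of_ord (e2 p a) = a) \/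
                            ((p <= a)%N /\ nat_of_ord (e2 p a) = (nat_of_ord a).+2).
  by move=> a; rewrite val_e2; case: (ltnP a p) => h; [left|right].
have re : forall a : 'I_(p + k), rho2 p (e2 p a) = Some a.
  move=> a; case: (rE (e2 p a)) => [[h1 h2]|[b [h1 h2]]].
    by case: (veE a) => [[h3 h4]|[h3 h4]]; move: h1; rewrite h4; lia.
  rewrite h1; congr Some; apply: ord_inj.
  by case: (veE a) => [[h3 h4]|[h3 h4]]; case: h2 => [[h5 h6]|[h5 h6]]; lia.
have emono : forall a b : 'I_(p + k), (a < b)%N -> (e2 p a < e2 p b)%N.
  by move=> a b h; case: (veE a) => [[h1 h2]|[h1 h2]]; case: (veE b) => [[h3 h4]|[h3 h4]]; lia.
have RSS : forall i j a b, rho2 p i = Some a -> rho2 p j = Some b -> R i j = (f a == f b).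
  by move=> i j a b Ei Ej; rewrite HR Ei Ej.
have RNS : forall i j b, rho2 p i = None -> rho2 p j = Some b -> R i j = false.
  by move=> i j b Ei Ej; rewrite HR Ei Ej.
have RSN : forall i j b, rho2 p i = Some b -> rho2 p j = None -> R i j = false.
  by move=> i j b Ei Ej; rewrite HR Ei Ej.
have RNN : forall i j, rho2 p i = None -> rho2 p j = None -> R i j.
  by move=> i j Ei Ej; rewrite HR Ei Ej.
have Re : forall a b, R (e2 p a) (e2 p b) = (f a == f b) by move=> a b; apply: RSS; apply: re.
have hq0 : (p < (p + k).+2)%N by lia.
have hq1 : (p.+1 < (p + k).+2)%N by lia.
set q0 : 'I_(p + k).+2 := Ordinal hq0.
set q1 : 'I_(p + k).+2 := Ordinal hq1.
have rq0 : rho2 p q0 = None by case: (rE q0) => [[h1 h2]|[b [h1 h2]]] //; case: h2 => /= [[h3 h4]|[h3 h4]]; lia.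
have rq1 : rho2 p q1 = None by case: (rE q1) => [[h1 h2]|[b [h1 h2]]] //; case: h2 => /= [[h3 h4]|[h3 h4]]; lia.
apply/idP/idP.
- move=> /and3P[/and3P[/ncrP nc /nosrP ns /sdrP sd] sm nmo]; apply/and3P; split.
  + apply/ncrP => a b c d ab bc cd fac fbd.
    have := nc (e2 p a) (e2 p b) (e2 p c) (e2 p d) (emono _ _ ab) (emono _ _ bc) (emono _ _ cd).
    by rewrite !Re; apply.
  + apply/nosrP => a; have [j [nji Rij]] := ns (e2 p a).
    case: (rE j) => [[h1 h2]|[b [h1 h2]]]; first by rewrite (RSN _ _ _ (re a) h2) in Rij.
    exists b; split; last by rewrite (RSS _ _ _ _ (re a) h1) in Rij.
    apply/eqP => E; move/eqP: nji; apply; apply: ord_inj; rewrite -E.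
    by case: (veE b) => [[h3 h4]|[h3 h4]]; case: h2 => [[h5 h6]|[h5 h6]]; lia.
  + apply/sdrP => a b ha hb fab.
    have := sd (e2 p a) (e2 p b); rewrite Re fab => E.
    have : Some a = Some b.
      rewrite -(re a) -(re b) E //.
        by case: (veE a) => [[h3 h4]|[h3 h4]]; move: ha; lia.
      by case: (veE b) => [[h3 h4]|[h3 h4]]; move: hb; lia.
    by case.
- move=> /and3P[/ncrP nc /nosrP ns /sdrP sd]; apply/and3P; split; [apply/and3P; split| |].
  + apply/ncrP => a b c d ab bc cd hac hbd.
    case: (rE a) => [[h1 h2]|[A [h1 h2]]].
      case: (rE c) => [[h3 h4]|[C' [h3 h4]]]; first by lia.
      by rewrite (RNS _ _ _ h2 h3) in hac.
    case: (rE c) => [[h3 h4]|[C' [h3 h4]]]; first by rewrite (RSN _ _ _ h1 h4) in hac.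
    case: (rE b) => [[h5 h6]|[B' [h5 h6]]].
      case: (rE d) => [[h7 h8]|[D [h7 h8]]]; first by lia.
      by rewrite (RNS _ _ _ h6 h7) in hbd.
    case: (rE d) => [[h7 h8]|[D [h7 h8]]]; first by rewrite (RSN _ _ _ h5 h8) in hbd.
    rewrite (RSS _ _ _ _ h1 h3) in hac; rewrite (RSS _ _ _ _ h5 h7) in hbd.
    rewrite (RSS _ _ _ _ h1 h5); apply: (nc A B' C' D) => //;
    by case: h2 => [[? ?]|[? ?]]; case: h4 => [[? ?]|[? ?]]; case: h6 => [[? ?]|[? ?]];
       case: h8 => [[? ?]|[? ?]]; lia.
  + apply/nosrP => i; case: (rE i) => [[h1 h2]|[a [h1 h2]]].
      case: (eqVneq (nat_of_ord i) p) => hip.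
        exists q1; split; last exact: RNN.
        by apply/eqP => E; move: hip; rewrite -E /=; lia.
      exists q0; split; last exact: RNN.
      by apply/eqP => E; move: hip; rewrite -E /=; lia.
    have [b [nba fab]] := ns a.
    exists (e2 p b); split; last by rewrite (RSS _ _ _ _ h1 (re b)).
    apply/eqP => E; move/eqP: nba; apply.
    by move: h1; rewrite -E re; case.
  + apply/sdrP => i j hi hj Rij.
    case: (rE i) => [[h1 h2]|[A [h1 h2]]]; case: (rE j) => [[h3 h4]|[B' [h3 h4]]].
    * by apply: ord_inj; move: hi hj; lia.
    * by rewrite (RNS _ _ _ h2 h3) in Rij.
    * by rewrite (RSN _ _ _ h1 h4) in Rij.
    * rewrite (RSS _ _ _ _ h1 h3) in Rij.
      have E : A = B'.
        apply: sd => //.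
          by case: h2 => [[? ?]|[? ?]]; move: hi; lia.
        by case: h4 => [[? ?]|[? ?]]; move: hj; lia.
      apply: ord_inj; move: E => /(congr1 (@nat_of_ord _)) E.
      by case: h2 => [[? ?]|[? ?]]; case: h4 => [[? ?]|[? ?]]; move: hi hj; lia.
  + by apply/samerP; exists q0, q1; split => //; apply: RNN.
  + apply/negP => /morerP [i [j [hi hj hj2 Rij]]].
    have ri : rho2 p i = None.
      by case: (rE i) => [[h1 h2]|[b [h1 h2]]] //; case: h2 => [[h3 h4]|[h3 h4]]; lia.
    case: (rE j) => [[h1 h2]|[b [h1 h2]]]; first by lia.
    by rewrite (RNS _ _ _ ri h1) in Rij.
Qed.
Lemma L1 (T : eqType) (p k : nat) (R : rel 'I_(p + k.+2)) (g : 'I_(p + k.+2) -> T) :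
  (forall i j, R i j = (g i == g j)) ->
  condr k.+1 R && ~~ samer p R = condr k.+2 R.
Proof.
move=> HR.
have hq1 : (p.+1 < p + k.+2)%N by lia.
set q1 : 'I_(p + k.+2) := Ordinal hq1.
apply/idP/idP.
- move=> /andP[/and3P[/ncrP nc /nosrP ns /sdrP sd] /samerP nsm].
  have claim : forall i j : 'I_(p + k.+2), nat_of_ord i = p -> (p.+1 <= j)%N -> R i j -> False.
    move=> i j hi hj Rij.
    have [a [naq Rqa]] := ns q1.
    case: (ltnP a p) => ha.
      have Raq : R a q1 by rewrite HR eq_sym -HR.
      have hai : (a < i)%N by rewrite hi.
      have hiq : (i < q1)%N by rewrite hi.
      have hqj : (q1 < j)%N.
        rewrite ltn_neqAle /= hj andbT; apply/eqP => E.
        by apply: nsm; exists i, j; split => //; rewrite -E.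
      have Rai := nc a i q1 j hai hiq hqj Raq Rij.
      apply: nsm; exists i, q1; split => //.
      rewrite HR in Rai; rewrite HR in Rqa; rewrite HR.
      by rewrite -(eqP Rai) (eqP Rqa).
    case: (eqVneq (nat_of_ord a) p) => hap.
      by apply: nsm; exists a, q1; split => //; rewrite HR eq_sym -HR.
    move/eqP: hap => hap; move/eqP: naq; apply; apply: sd; [lia | rewrite /=; lia | by rewrite HR eq_sym -HR].
  apply/and3P; split; [by apply/ncrP | by apply/nosrP |].
  apply/sdrP => i j hi hj Rij.
  case: (ltnP p i) => h1; case: (ltnP p j) => h2.
  + by apply: sd => //; lia.
  + have hj' : nat_of_ord j = p by lia.
    by exfalso; apply: (claim j i) => //; rewrite HR eq_sym -HR.
  + have hi' : nat_of_ord i = p by lia.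
    by exfalso; apply: (claim i j).
  + by apply: ord_inj; lia.
- move=> /and3P[nc ns /sdrP sd]; apply/andP; split.
    apply/and3P; split => //; apply/sdrP => i j hi hj; apply: sd; lia.
  apply/negP => /samerP [i [j [hi hj Rij]]].
  have := sd i j; rewrite hi hj Rij => /(_ _ _ isT) E.
  have : i = j by apply: E; lia.
  by move/(congr1 (@nat_of_ord _)); lia.
Qed.
Definition lst (C : numClosedFieldType) (B : algType C) (N : nat) (x : seq B) (V : {set 'I_N}) :
  seq B := [seq nth 0 x (nat_of_ord i) | i <- enum V].
Definition wt (C : numClosedFieldType) (B : algType C) (phi : B -> C) (Lam : B -> B -> B)
  (N : nat) (x : seq B) (P : {set {set 'I_N}}) : C :=
  \prod_(V in P) Kw phi Lam (lst x V).
Definition natmem (N : nat) (V : {set 'I_N}) (n : nat) : bool :=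
  n \in [seq nat_of_ord i | i <- enum V].

Lemma natmem_ord (N : nat) (V : {set 'I_N}) (a : 'I_N) : natmem V a = (a \in V).
Proof. by rewrite /natmem (mem_map (@ord_inj N)) mem_enum. Qed.

Lemma natmemP (N : nat) (V : {set 'I_N}) (n : nat) :
  natmem V n -> exists a : 'I_N, a \in V /\ nat_of_ord a = n.
Proof. by move=> /mapP[a]; rewrite mem_enum => aV ->; exists a. Qed.

Lemma enum_nat (N : nat) (V : {set 'I_N}) (Q : pred nat) :
  (forall i : 'I_N, Q i = (i \in V)) ->
  [seq nat_of_ord i | i <- enum V] = filter Q (iota 0 N).
Proof.
move=> H; rewrite -val_enum_ord filter_map; congr map.
rewrite enumT /enum_mem; apply: eq_filter => i.
by rewrite /preim /= H.
Qed.

Lemma lst_nat (C : numClosedFieldType) (B : algType C) (N : nat) (x : seq B) (V : {set 'I_N})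
  (Q : pred nat) :
  (forall i : 'I_N, Q i = (i \in V)) -> lst x V = map (nth 0 x) (filter Q (iota 0 N)).
Proof. by move=> H; rewrite /lst -(enum_nat H) -map_comp. Qed.

Lemma someE (T : eqType) (a b : T) : (Some a == Some b) = (a == b).
Proof. by []. Qed.

Lemma ext_tot (N M : nat) (rho : 'I_N -> 'I_M) (e : 'I_M -> 'I_N) (P' : {set {set 'I_M}}) :
  (forall a, rho (e a) = a) -> partition P' [set: 'I_M] ->
  ext (fun i => Some (rho i)) P' = [set [set i | rho i \in V'] | V' : {set 'I_M} in P'].
Proof.
move=> Hre hP; have /and3P[/eqP cov tI n0] := hP.
apply/setP => V; rewrite /ext /PP /preim_partition /equivalence_partition.
apply/imsetP/imsetP.
- move=> [x _ ->]; exists (pblock P' (rho x)); first by rewrite pblock_mem // cov inE.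
  by apply/setP => y; rewrite !inE /= someE eq_pblock // cov inE.
- move=> [V' hV' ->].
  have /set0Pn[a aV] : V' != set0 by apply: contraNneq n0 => <-.
  exists (e a) => //; apply/setP => y; rewrite !inE /= Hre someE eq_pblock ?cov ?inE //.
  by rewrite (def_pblock tI hV' aV).
Qed.

Lemma ext_opt (N M : nat) (rho : 'I_N -> option 'I_M) (e : 'I_M -> 'I_N) (i0 : 'I_N)
  (P' : {set {set 'I_M}}) :
  (forall a, rho (e a) = Some a) -> rho i0 = None -> partition P' [set: 'I_M] ->
  ext rho P' = [set i | rho i == None] |:
     [set [set i | if rho i is Some a then a \in V' else false] | V' : {set 'I_M} in P'].
Proof.
move=> Hre Hi0 hP; have /and3P[/eqP cov tI n0] := hP.
apply/setP => V; rewrite in_setU1 /ext /PP /preim_partition /equivalence_partition.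
apply/imsetP/orP.
- move=> [x _ ->]; case Ex: (rho x) => [a|].
    right; apply/imsetP; exists (pblock P' a); first by rewrite pblock_mem // cov inE.
    apply/setP => y; rewrite !inE; case: (rho y) => [b|] //=.
    by rewrite someE eq_pblock // cov inE.
  by left; apply/eqP/setP => y; rewrite !inE; case: (rho y).
- move=> [/eqP -> | /imsetP [V' hV' ->]].
    by exists i0 => //; apply/setP => y; rewrite !inE Hi0; case: (rho y).
  have /set0Pn[a aV] : V' != set0 by apply: contraNneq n0 => <-.
  exists (e a) => //; apply/setP => y; rewrite !inE Hre; case: (rho y) => [b|] //=.
  by rewrite someE eq_pblock ?cov ?inE // (def_pblock tI hV' aV).
Qed.

Lemma iota3 (p k : nat) : iota 0 (p + k.+1).+1 = iota 0 p ++ [:: p, p.+1 & iota p.+2 k].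
Proof. by rewrite -addnS iotaD. Qed.

Lemma iota1 (p k : nat) : iota 0 (p + k.+1) = iota 0 p ++ p :: iota p.+1 k.
Proof. by rewrite iotaD. Qed.

Lemma iotaS' (a k : nat) : iota a.+1 k = map (addn 1) (iota a k).
Proof. by rewrite -iotaDl. Qed.

Lemma LL3 (C : numClosedFieldType) (B : algType C) (Lam : B -> B -> B) (Q : pred nat)
  (pre r : seq B) u t (p k : nat) : size pre = p -> size r = k ->
  map (nth 0 (pre ++ u :: t :: r))
    (filter (fun n => Q (if (n <= p)%N then n else n.-1)) (iota 0 (p + k.+1).+1))
  = map (nth 0 (pre ++ Lam u t :: r)) (filter Q (iota 0 p)) ++
    (if Q p then [:: u; t] else [::]) ++
    map (nth 0 (pre ++ Lam u t :: r)) (filter Q (iota p.+1 k)).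
Proof.
move=> hp hk; rewrite iota3 filter_cat map_cat; congr (_ ++ _).
  rewrite (@eq_in_filter _ _ Q); last by move=> n; rewrite mem_iota => /andP[_ h]; rewrite ifT //; lia.
  apply/eq_in_map => n; rewrite mem_filter mem_iota => /and3P[_ _ h].
  by rewrite !nth_cat hp ifT // ifT.
have tail : map (nth 0 (pre ++ [:: u, t & r]))
    (filter (fun n => Q (if (n <= p)%N then n else n.-1)) (iota p.+2 k))
   = map (nth 0 (pre ++ Lam u t :: r)) (filter Q (iota p.+1 k)).
  rewrite iotaS' filter_map -map_comp.
  rewrite (@eq_in_filter _ _ Q); last first.
    by move=> n; rewrite mem_iota => /andP[h _] /=; rewrite ifF //; lia.
  apply/eq_in_map => n; rewrite mem_filter mem_iota => /and3P[_ h _] /=.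
  rewrite !nth_cat hp ifF; last by lia.
  rewrite ifF; last by lia.
  have -> : (1 + n - p = (n - p.+1).+2)%N by lia.
  by have -> : (n - p = (n - p.+1).+1)%N by lia.
have hu : nth 0 (pre ++ [:: u, t & r]) p = u by rewrite nth_cat hp ltnn subnn.
have ht : nth 0 (pre ++ [:: u, t & r]) p.+1 = t.
  by rewrite nth_cat hp ltnNge leqnSn /= subSnn.
rewrite -tail /= leqnn ltnn /=.
by case: (Q p) => /=; rewrite ?hu ?ht.
Qed.

Lemma LL1 (C : numClosedFieldType) (B : algType C) (Q : pred nat) (pre r : seq B) (y : B)
  (p k : nat) : size pre = p -> size r = k ->
  map (nth 0 (pre ++ y :: r)) (filter Q (iota 0 (p + k.+1)))
  = map (nth 0 (pre ++ y :: r)) (filter Q (iota 0 p)) ++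
    (if Q p then [:: y] else [::]) ++
    map (nth 0 (pre ++ y :: r)) (filter Q (iota p.+1 k)).
Proof.
move=> hp hk; rewrite iota1 filter_cat map_cat /=; congr (_ ++ _).
by case: (Q p) => //=; rewrite nth_cat hp ltnn subnn.
Qed.
Lemma iota2 (p k : nat) : iota 0 (p + k).+2 = iota 0 p ++ [:: p, p.+1 & iota p.+2 k].
Proof. by rewrite -addnS -addnS iotaD. Qed.

Lemma LL2 (C : numClosedFieldType) (B : algType C) (Q : pred nat)
  (pre r : seq B) u t (p k : nat) : size pre = p -> size r = k ->
  map (nth 0 (pre ++ u :: t :: r))
    (filter (fun n => if (p <= n <= p.+1)%N then false else Q (if (n < p)%N then n else (n - 2)%N))
       (iota 0 (p + k).+2))
  = map (nth 0 (pre ++ r)) (filter Q (iota 0 (p + k))).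
Proof.
move=> hp hk; rewrite iota2 iotaD !filter_cat !map_cat; congr (_ ++ _).
  rewrite (@eq_in_filter _ _ Q); last first.
    move=> n; rewrite mem_iota => /andP[_ h].
    rewrite ifF; last by apply/negbTE/negP => /andP[? ?]; lia.
    by rewrite ifT.
  apply/eq_in_map => n; rewrite mem_filter mem_iota => /and3P[_ _ h].
  by rewrite !nth_cat hp ifT // ifT.
rewrite /= leqnSn leqnn ltnSn /=.
rewrite (iotaDl 2) filter_map -map_comp add0n.
rewrite (@eq_in_filter _ _ Q); last first.
  move=> n; rewrite mem_iota => /andP[h _] /=.
  rewrite ifF; last by apply/negbTE/negP => /andP[? ?]; lia.
  rewrite ifF; last by apply/negbTE; lia.
  by congr Q; lia.
apply/eq_in_map => n; rewrite mem_filter mem_iota => /and3P[_ h _] /=.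
rewrite !nth_cat hp ifF; last by lia.
rewrite ifF; last by lia.
by have -> : (2 + n - p = (n - p).+2)%N by lia.
Qed.

Lemma LLN (C : numClosedFieldType) (B : algType C) (pre r : seq B) u t (p k : nat) :
  size pre = p -> size r = k ->
  map (nth 0 (pre ++ u :: t :: r)) (filter (fun n => (p <= n <= p.+1)%N) (iota 0 (p + k).+2))
  = [:: u; t].
Proof.
move=> hp hk; rewrite iota2 filter_cat map_cat.
rewrite (@eq_in_filter _ _ pred0) ?filter_pred0; last first.
  by move=> n; rewrite mem_iota => /andP[_ h] /=; apply/negbTE; lia.
rewrite /= leqnn leqnSn /= leqnn /=.
rewrite (@eq_in_filter _ _ pred0) ?filter_pred0; last first.
  by move=> n; rewrite mem_iota => /andP[h _] /=; apply/negbTE; lia.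
by rewrite !nth_cat hp ltnn subnn ltnNge leqnSn /= subSnn.
Qed.
Definition G (C : numClosedFieldType) (B : algType C) (phi : B -> C) (Lam : B -> B -> B)
  (N : nat) (x : seq B) (m : nat) : C :=
  \sum_(P : {set {set 'I_N}} | partition P [set: 'I_N] && condr m (smP P)) wt phi Lam x P.
Definition G3 (C : numClosedFieldType) (B : algType C) (phi : B -> C) (Lam : B -> B -> B)
  (N : nat) (x : seq B) (p m : nat) : C :=
  \sum_(P : {set {set 'I_N}} | partition P [set: 'I_N] &&
          [&& condr m (smP P), samer p (smP P) & morer p (smP P)]) wt phi Lam x P.
Definition G2 (C : numClosedFieldType) (B : algType C) (phi : B -> C) (Lam : B -> B -> B)
  (N : nat) (x : seq B) (p m : nat) : C :=
  \sum_(P : {set {set 'I_N}} | partition P [set: 'I_N] &&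
          [&& condr m (smP P), samer p (smP P) & ~~ morer p (smP P)]) wt phi Lam x P.

Lemma vrE3 (p k : nat) (dd : 'I_(p + k.+1)) (i : 'I_(p + k.+1).+1) :
  ((i <= p)%N /\ nat_of_ord (rho3 p dd i) = i) \/ ((p < i)%N /\ nat_of_ord (rho3 p dd i) = i.-1).
Proof. by rewrite val_rho3; [case: (leqP i p) => h; [left|right] | lia]. Qed.

Lemma veE3 (p k : nat) (a : 'I_(p + k.+1)) :
  ((a < p)%N /\ nat_of_ord (e3 p a) = a) \/ ((p <= a)%N /\ nat_of_ord (e3 p a) = a.+1).
Proof. by rewrite val_e3; case: (ltnP a p) => h; [left|right]. Qed.

Lemma re3 (p k : nat) (dd : 'I_(p + k.+1)) (a : 'I_(p + k.+1)) : rho3 p dd (e3 p a) = a.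
Proof.
apply: ord_inj.
by case: (veE3 a) => [[h1 h2]|[h1 h2]]; case: (vrE3 dd (e3 p a)) => [[h3 h4]|[h3 h4]]; lia.
Qed.

Lemma partP (N : nat) (P : {set {set 'I_N}}) (V : {set 'I_N}) (a b : 'I_N) :
  partition P [set: 'I_N] -> V \in P -> a \in V -> b \in V -> smP P a b.
Proof.
move=> /and3P[_ tI _] hV aV bV.
by rewrite /smP (def_pblock tI hV aV) (def_pblock tI hV bV).
Qed.

Lemma partP2 (N : nat) (P : {set {set 'I_N}}) (a b : 'I_N) :
  partition P [set: 'I_N] -> smP P a b -> b \in pblock P a.
Proof.
move=> /and3P[/eqP cov tI _]; rewrite /smP eq_pblock // cov inE //.
Qed.

Lemma A3 (C : numClosedFieldType) (B : algType C) (phi : B -> C) (Lam : B -> B -> B)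
  (pre r : seq B) u t (p k : nat) : size pre = p -> size r = k ->
  G3 phi Lam (p + k.+1).+1 (pre ++ u :: t :: r) p k.+1
  = G phi Lam (p + k.+1) (pre ++ Lam u t :: r) k.+1.
Proof.
move=> hp hk.
have hpM : (p < p + k.+1)%N by lia.
set dd : 'I_(p + k.+1) := Ordinal hpM.
rewrite /G3 /G (@trans_sum _ _ _ (e3 p) (fun i => Some (rho3 p dd i))
   (fun R => [&& condr k.+1 R, samer p R & morer p R]) (condr k.+1)).
- apply: eq_bigr => P' /andP[hP' hC].
  have /and3P[/eqP cov tI n0] := hP'.
  move: hC => /and3P[_ /nosrP ns /sdrP sd].
  rewrite (ext_tot (e := e3 p) (P' := P') (re3 dd) hP') /wt big_imset; last first.
    move=> V1 V2 _ _ E; apply/setP => a.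
    by have := congr1 (fun S : {set 'I_(p + k.+1).+1} => e3 p a \in S) E; rewrite /= !inE re3.
  apply: eq_bigr => V' hV'.
  rewrite (@lst_nat _ _ _ _ _ (fun n => natmem V' (if (n <= p)%N then n else n.-1))); last first.
    by move=> i; rewrite inE -natmem_ord val_rho3.
  rewrite (LL3 Lam _ _ _ hp hk) (@lst_nat _ _ _ _ _ (natmem V')); last by move=> i; rewrite natmem_ord.
  rewrite (@LL1 _ _ (natmem V') pre r (Lam u t) p k hp hk).
  case hQ: (natmem V' p); last by [].
  have [a [aV va]] := natmemP hQ.
  have -> : [seq n <- iota p.+1 k | natmem V' n] = [::].
    rewrite (@eq_in_filter _ _ pred0) ?filter_pred0 // => n; rewrite mem_iota => /andP[h1 h2] /=.
    apply/negbTE/negP => /natmemP [b [bV vb]].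
    have := sd a b; rewrite (partP hP' hV' aV bV) => /(_ _ _ isT) E.
    have : a = b by apply: E; lia.
    by move/(congr1 (@nat_of_ord _)); lia.
  have [j [nja Rj]] := ns a.
  have jV : j \in V' by move: (partP2 hP' Rj); rewrite (def_pblock tI hV' aV).
  have jp : (j < p)%N.
    rewrite ltnNge; apply/negP => hj; move/eqP: nja; apply; apply: sd => //; try lia.
    by rewrite /smP eq_sym.
  have : nat_of_ord j \in [seq n <- iota 0 p | natmem V' n].
    by rewrite mem_filter natmem_ord jV mem_iota.
  case: [seq n <- iota 0 p | natmem V' n] => [|y l] // _.
  by rewrite !cats0 Kw_merge.
- by move=> a; rewrite re3.
- move=> P hP /and3P[_ /samerP [i0 [j0 [hi0 hj0 R0]]] _] i j /=; rewrite someE.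
  have E : forall i, pblock P (e3 p (rho3 p dd i)) = pblock P i.
    move=> i'; case: (eqVneq (nat_of_ord i') p) => hi'.
      have -> : i' = i0 by apply: ord_inj; lia.
      have -> : e3 p (rho3 p dd i0) = j0.
        apply: ord_inj; case: (vrE3 dd i0) => [[h1 h2]|[h1 h2]];
          case: (veE3 (rho3 p dd i0)) => [[h3 h4]|[h3 h4]]; lia.
      by rewrite (eqP R0).
    congr pblock; apply: ord_inj.
    by case: (vrE3 dd i') => [[h1 h2]|[h1 h2]];
      case: (veE3 (rho3 p dd i')) => [[h3 h4]|[h3 h4]]; move/eqP: hi'; lia.
  by rewrite !E.
- by move=> f; apply: R3.
Qed.
Lemma veE2 (p k : nat) (a : 'I_(p + k)) :
  ((a < p)%N /\ nat_of_ord (e2 p a) = a) \/ ((p <= a)%N /\ nat_of_ord (e2 p a) = (nat_of_ord a).+2).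
Proof. by rewrite val_e2; case: (ltnP a p) => h; [left|right]. Qed.

Lemma re2 (p k : nat) (a : 'I_(p + k)) : rho2 p (e2 p a) = Some a.
Proof.
have hp : (p <= p + k)%N by lia.
case: (rE2 (e2 p a) hp) => [[h1 h2]|[b [h1 h2]]].
  by case: (veE2 a) => [[h3 h4]|[h3 h4]]; move: h1; rewrite h4; lia.
rewrite h1; congr Some; apply: ord_inj.
by case: (veE2 a) => [[h3 h4]|[h3 h4]]; case: h2 => [[h5 h6]|[h5 h6]]; lia.
Qed.

Lemma e2rho2 (p k : nat) (i : 'I_(p + k).+2) (a : 'I_(p + k)) : rho2 p i = Some a -> e2 p a = i.
Proof.
have hp : (p <= p + k)%N by lia.
move=> E; case: (rE2 i hp) => [[h1 h2]|[b [h1 h2]]]; first by rewrite h2 in E.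
rewrite E in h1; move: h1 h2 => [<-] h2; apply: ord_inj.
by case: (veE2 a) => [[h3 h4]|[h3 h4]]; case: h2 => [[h5 h6]|[h5 h6]]; lia.
Qed.

Lemma A2 (C : numClosedFieldType) (B : algType C) (phi : B -> C) (Lam : B -> B -> B)
  (pre r : seq B) u t (p k : nat) : size pre = p -> size r = k ->
  G2 phi Lam (p + k).+2 (pre ++ u :: t :: r) p k.+1
  = phi (u * t) * G phi Lam (p + k) (pre ++ r) k.
Proof.
move=> hp hk.
have hpk : (p <= p + k)%N by lia.
have hq0 : (p < (p + k).+2)%N by lia.
set q0 : 'I_(p + k).+2 := Ordinal hq0.
have rq0 : rho2 p q0 = None.
  by case: (rE2 q0 hpk) => [[h1 h2]|[b [h1 h2]]] //; case: h2 => /= [[h3 h4]|[h3 h4]]; lia.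
rewrite /G2 /G (@trans_sum _ _ _ (e2 p) (rho2 p)
   (fun R => [&& condr k.+1 R, samer p R & ~~ morer p R]) (condr k)).
- rewrite mulr_sumr; apply: eq_bigr => P' /andP[hP' hC].
  rewrite (ext_opt (e := e2 p) (i0 := q0) (P' := P') (@re2 p k) rq0 hP') /wt big_setU1 /=;
    last first.
    apply/imsetP => [[V' _ E]]; have : q0 \in [set i | rho2 p i == None] by rewrite inE rq0.
    by rewrite E inE rq0.
  rewrite big_imset; last first.
    move=> V1 V2 _ _ E; apply/setP => a.
    by have := congr1 (fun S : {set 'I_(p + k).+2} => e2 p a \in S) E; rewrite /= !inE re2.
  congr (_ * _).
    rewrite (@lst_nat _ _ _ _ _ (fun n => (p <= n <= p.+1)%N)); last first.
      move=> i; rewrite inE; case: (rE2 i hpk) => [[h1 h2]|[b [h1 h2]]]; rewrite ?h1 ?h2 //.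
      by apply/negbTE/negP => /andP[? ?]; case: h2 => [[? ?]|[? ?]]; lia.
    by rewrite (@LLN _ _ pre r u t p k hp hk).
  apply: eq_bigr => V' hV'.
  rewrite (@lst_nat _ _ _ _ _ (fun n => if (p <= n <= p.+1)%N then false
                 else natmem V' (if (n < p)%N then n else (n - 2)%N))); last first.
    move=> i; rewrite inE; case: (rE2 i hpk) => [[h1 h2]|[b [h1 h2]]]; rewrite ?h1 ?h2 //.
    rewrite -natmem_ord ifF; last by apply/negbTE/negP => /andP[? ?]; case: h2 => [[? ?]|[? ?]]; lia.
    by case: h2 => [[h3 h4]|[h3 h4]]; [rewrite ifT // h4 | rewrite ifF ?h4 //]; lia.
  rewrite (@LL2 _ _ (natmem V') pre r u t p k hp hk) (@lst_nat _ _ _ _ _ (natmem V')) //.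
  by move=> i; rewrite natmem_ord.
- by move=> a; rewrite re2.
- move=> P hP /and3P[_ /samerP [i0 [j0 [hi0 hj0 R0]]] /morerP nmo] i j.
  have sym : forall a b, smP P a b = smP P b a by move=> a b; rewrite /smP eq_sym.
  have trans : forall a b c, smP P a b -> smP P b c -> smP P a c.
    by move=> a b c; rewrite /smP => /eqP -> /eqP ->.
  have NS : forall i j b, rho2 p i = None -> rho2 p j = Some b -> smP P i j = false.
    move=> i' j' b Ei Ej; apply/negbTE/negP => Rij.
    case: (rE2 i' hpk) => [[h1 h2]|[c [h1 h2]]]; last by rewrite h1 in Ei.
    case: (rE2 j' hpk) => [[h3 h4]|[c [h3 h4]]]; first by rewrite h4 in Ej.
    case: (eqVneq (nat_of_ord i') p) => hi'.
      by apply: nmo; exists i', j'; split => //; case: h4 => [[? ?]|[? ?]]; lia.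
    have ei : i' = j0 by apply: ord_inj; move/eqP: hi'; lia.
    apply: nmo; exists i0, j'; split => //; try (by case: h4 => [[? ?]|[? ?]]; lia).
    by apply: trans R0 _; rewrite -ei.
  case: (rE2 i hpk) => [[h1 h2]|[a [h1 h2]]]; case: (rE2 j hpk) => [[h3 h4]|[b [h3 h4]]].
  + rewrite h2 h4 /=; have E : forall i' : 'I_(p + k).+2, (p <= i' <= p.+1)%N -> i' = i0 \/ i' = j0.
      move=> i' /andP[? ?]; case: (eqVneq (nat_of_ord i') p) => h.
        by left; apply: ord_inj; lia.
      by right; apply: ord_inj; move/eqP: h; lia.
    have R0' : smP P j0 i0 by rewrite sym.
    by case: (E i h1) => ->; case: (E j h3) => ->; rewrite ?R0 ?R0' /smP ?eqxx.
  + by rewrite (NS _ _ _ h2 h3) h2 h3.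
  + by rewrite sym (NS _ _ _ h4 h1) h1 h4.
  + by rewrite h1 h3 /= someE (e2rho2 h1) (e2rho2 h3).
- by move=> f; apply: R2.
Qed.
Lemma SC (C : numClosedFieldType) (B : algType C) (phi : B -> C) (Lam : B -> B -> B) :
  (forall (a : C) (x y z : B), Lam z (a *: x + y) = a *: Lam z x + Lam z y) ->
  (forall (a : C) (x y : B), phi (a *: x + y) = a * phi x + phi y) ->
  forall (N : nat) (x x' : seq B) (m q : nat) (c : C),
  (N - m <= q)%N -> (q < N)%N ->
  (forall i, i != q -> nth 0 x' i = nth 0 x i) -> nth 0 x' q = c *: nth 0 x q ->
  G phi Lam N x' m = c * G phi Lam N x m.
Proof.
move=> hL hp N x x' m q c h1 h2 Hx Hq.
rewrite /G mulr_sumr; apply: eq_bigr => P /andP[hP /and3P[_ _ /sdrP sd]].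
have /and3P[/eqP cov tI n0] := hP.
set qo : 'I_N := Ordinal h2.
set V0 := pblock P qo.
have V0P : V0 \in P by rewrite pblock_mem // cov inE.
have qV0 : qo \in V0 by rewrite mem_pblock cov inE.
rewrite /wt (bigD1 V0) //= [in RHS](bigD1 V0) //= mulrA; congr (_ * _).
  rewrite !(@lst_nat _ _ _ _ _ (natmem V0)); try by move=> i; rewrite natmem_ord.
  have -> : iota 0 N = iota 0 q ++ q :: iota q.+1 (N - q.+1).
    by rewrite -iota1; congr iota; lia.
  rewrite filter_cat /= (natmem_ord V0 qo) qV0.
  rewrite (@eq_in_filter _ _ pred0 (iota q.+1 _)) ?filter_pred0; last first.
    move=> n; rewrite mem_iota => /andP[hn1 hn2] /=; apply/negbTE/negP => /natmemP [b [bV vb]].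
    have : qo = b by apply: sd; [rewrite /=; lia | lia | exact: partP hP V0P qV0 bV].
    by move/(congr1 (@nat_of_ord _)) => /=; lia.
  rewrite !map_cat /= Hq.
  transitivity (Kw phi Lam (rcons [seq nth 0 x i | i <- iota 0 q & natmem V0 i] (c *: nth 0 x q))).
    rewrite -cats1; congr (Kw _ _ (_ ++ _)).
    by apply/eq_in_map => n; rewrite mem_filter mem_iota => /andP[_ hn]; apply: Hx; apply/eqP; lia.
  by rewrite Kw_scale // cats1.
apply: eq_bigr => V /andP[VP nV]; congr Kw; apply/eq_in_map => i; rewrite mem_enum => iV.
apply: Hx; apply/eqP => E; move/eqP: nV; apply.
by rewrite -(def_pblock tI VP iV) /V0; congr pblock; exact: ord_inj.
Qed.

Lemma Gbase (C : numClosedFieldType) (B : algType C) (phi : B -> C) (Lam : B -> B -> B)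
  (s : seq B) : G phi Lam (size s) s (size s) = if s is [::] then 1 else 0.
Proof.
case: s => [|a s] /=.
  have hP0 : partition (set0 : {set {set 'I_0}}) [set: 'I_0].
    rewrite /partition inE andbT; apply/andP; split.
      by apply/eqP/setP => -[].
    by rewrite /trivIset /cover !big_set0 cards0.
  rewrite /G (bigD1 set0) /=; last first.
    rewrite hP0 /condr /=; apply/and3P; split; [apply/ncrP | apply/nosrP | apply/sdrP]; by case.
  rewrite big1 ?addr0 /wt ?big_set0 // => P /andP[/andP[/and3P[_ _ n0] _] nP].
  have /set0Pn [V VP] : P != set0 by [].
  have : V = set0 by apply/setP => -[].
  by move=> E; rewrite E in VP; rewrite VP in n0.
rewrite /G big_pred0 // => P; apply/negbTE/negP => /andP[_ /and3P[_ /nosrP ns /sdrP sd]].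
have [j [nj R]] := ns ord0.
move/eqP: nj; apply; apply: sd; rewrite ?subnn //.
by rewrite /smP eq_sym.
Qed.

Lemma G01 (C : numClosedFieldType) (B : algType C) (phi : B -> C) (Lam : B -> B -> B)
  (N : nat) (x : seq B) : G phi Lam N x 0 = G phi Lam N x 1.
Proof.
rewrite /G; apply: eq_bigl => P; congr (_ && _); rewrite /condr; congr [&& _, _ & _].
have -> : sdr 0 (smP P) by apply/sdrP => i j hi; have := ltn_ord i; lia.
apply/esym/sdrP => i j hi hj _; apply: ord_inj; have := ltn_ord i; have := ltn_ord j; lia.
Qed.

Lemma CL (C : numClosedFieldType) (B : algType C) (phi : B -> C) (Lam : B -> B -> B)
  (x : seq B) (p k : nat) :
  G phi Lam (p + k.+2) x k.+1 =
  G phi Lam (p + k.+2) x k.+2 + G2 phi Lam (p + k.+2) x p k.+1 + G3 phi Lam (p + k.+2) x p k.+1.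
Proof.
rewrite {1}/G (bigID (fun P => samer p (smP P))) /= addrC -addrA; congr (_ + _).
  by apply: eq_bigl => P; rewrite -andbA (L1 (g := pblock P)).
rewrite (bigID (fun P => morer p (smP P))) /= addrC; congr (_ + _); apply: eq_bigl => P.
  by rewrite -!andbA.
by rewrite -!andbA.
Qed.

Lemma CLfull (C : numClosedFieldType) (B : algType C) (phi : B -> C) (Lam : B -> B -> B)
  (pre r : seq B) u t (p k : nat) : size pre = p -> size r = k ->
  G phi Lam (p + k.+2) (pre ++ u :: t :: r) k.+1 =
  G phi Lam (p + k.+2) (pre ++ u :: t :: r) k.+2
  + phi (u * t) * G phi Lam (p + k) (pre ++ r) k
  + G phi Lam (p + k.+1) (pre ++ Lam u t :: r) k.+1.
Proof.
move=> hp hk; rewrite CL.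
have -> : G2 phi Lam (p + k.+2) (pre ++ u :: t :: r) p k.+1
        = G2 phi Lam (p + k).+2 (pre ++ u :: t :: r) p k.+1 by rewrite !addnS.
have -> : G3 phi Lam (p + k.+2) (pre ++ u :: t :: r) p k.+1
        = G3 phi Lam (p + k.+1).+1 (pre ++ u :: t :: r) p k.+1 by rewrite addnS.
by rewrite (@A2 _ _ phi Lam pre r u t p k hp hk) (@A3 _ _ phi Lam pre r u t p k hp hk).
Qed.
Lemma TG (C : numClosedFieldType) (B : algType C) (phi : B -> C) (Lam : B -> B -> B) :
  (forall (a : C) (x y z : B), Lam z (a *: x + y) = a *: Lam z x + Lam z y) ->
  (forall (a : C) (x y : B), phi (a *: x + y) = a * phi x + phi y) ->
  forall v s, trv phi Lam v s = G phi Lam (size v + size s) (rev v ++ s) (size s).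
Proof.
move=> hL hp; elim=> [|u v IH] s.
  by rewrite /= add0n Gbase.
rewrite /= rev_cons cat_rcons.
have sv : size (rev v) = size v by rewrite size_rev.
case: s => [|t r].
  rewrite !addr0 IH /= addn0 G01; congr G; lia.
have -> : ((size v).+1 + size (t :: r) = size v + (size r).+2)%N by rewrite /=; lia.
rewrite (@CLfull _ _ phi Lam (rev v) r u t (size v) (size r) sv erefl).
rewrite IH /=; congr (_ + _ + _); last by rewrite IH.
case: r => [|t2 r] /=.
  by rewrite IH addn0 cats0.
rewrite IH /=.
apply: (@SC _ _ phi Lam hL hp _ _ _ _ (size v)); rewrite ?addnS ?addKn //; try lia.
  move=> i ni; rewrite !nth_cat sv; case: ifP => // h.
  by case E: (i - size v)%N => [|n] //; move/eqP: ni; lia.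
by rewrite !nth_cat sv ltnn subnn.
Qed.

Lemma Gfull (C : numClosedFieldType) (B : algType C) (phi : B -> C) (Lam : B -> B -> B)
  (N : nat) (x : seq B) :
  G phi Lam N x 0 = \sum_(P : {set {set 'I_N}} | NCpart P) wt phi Lam x P.
Proof.
rewrite (bigID (fun P => nosr (smP P))) /= [X in _ = _ + X]big1 ?addr0.
  apply: eq_bigl => P; rewrite NCpartE /condr -!andbA; congr (_ && (_ && _)).
  have -> : sdr 0 (smP P) = true by apply/sdrP => i j hi; have := ltn_ord i; lia.
  by rewrite andbT.
move=> P /andP[]; rewrite NCpartE => /andP[hP _].
have /and3P[/eqP cov tI n0] := hP.
rewrite /nosr negb_forall; case/existsP => i; rewrite negb_exists => /forallP H.
set V := pblock P i.
have VP : V \in P by rewrite pblock_mem // cov inE.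
have E : V = [set i].
  apply/setP => j; rewrite inE; apply/idP/eqP => [jV|->]; last by rewrite mem_pblock cov inE.
  apply/eqP; apply: contraT => nj; have := H j; rewrite nj /=.
  by rewrite /smP (def_pblock tI VP jV) /V eqxx.
have iP : [set i] \in P by rewrite -E.
by rewrite /wt (bigD1 [set i]) //= /lst enum_set1 /= mul0r.
Qed.
Lemma enum_nth (C : numClosedFieldType) (B : algType C) (n : nat) (w : seq B) :
  size w = n -> [seq nth 0 w (nat_of_ord i) | i <- enum 'I_n] = w.
Proof.
move=> hw; rewrite (map_comp (nth 0 w) (@nat_of_ord n)).
have -> : [seq nat_of_ord i | i <- enum 'I_n] = iota 0 n by exact: val_enum_ord.
by rewrite -hw; exact: mkseq_nth.
Qed.

Lemma main_ind (C : numClosedFieldType) (B : algType C) (star : B -> B) (phi : B -> C)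
  (gamma : B -> B) (Lam : B -> B -> B) (Rc : seq (op B) -> C) :
  (forall (a : C) (x y z : B), Lam z (a *: x + y) = a *: Lam z x + Lam z y) ->
  (forall (a : C) (x y : B), phi (a *: x + y) = a * phi x + phi y) ->
  (forall b, gamma b = 0) ->
  free_cumulants (psi star phi gamma) Rc ->
  forall n (w : seq B), size w = n -> (0 < n)%N ->
    Rc (map (Xop phi gamma Lam) w) = Kw phi Lam w.
Proof.
move=> hL hp g0 hR n; elim/ltn_ind: n => n IH w hw hn.
have key := hR n (fun i => Xop phi gamma Lam (nth 0 w i)).
have Ew : [seq Xop phi gamma Lam (nth 0 w i) | i : 'I_n <- enum 'I_n] = map (Xop phi gamma Lam) w.
  by rewrite (map_comp (Xop phi gamma Lam) (fun i : 'I_n => nth 0 w i)) enum_nth.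
rewrite Ew psi_X // (TG hL hp) size_rev revK addn0 cats0 hw Gfull in key.
set P0 : {set {set 'I_n}} := [set [set: 'I_n]].
have nT : [set: 'I_n] != set0.
  by apply/set0Pn; exists (Ordinal hn); rewrite inE.
have NC0 : NCpart P0.
  rewrite NCpartE; apply/andP; split.
    by rewrite /partition cover1 eqxx trivIset1 inE eq_sym nT.
  apply/ncrP => a b c d _ _ _ _ _.
  by rewrite /smP (def_pblock (trivIset1 _) (set11 _) (in_setT a))
                  (def_pblock (trivIset1 _) (set11 _) (in_setT b)).
rewrite (bigD1 P0 NC0) [in RHS](bigD1 P0 NC0) /= in key.
have rest : \sum_(P : {set {set 'I_n}} | NCpart P && (P != P0)) wt phi Lam w P =
  \sum_(P : {set {set 'I_n}} | NCpart P && (P != P0))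
      \prod_(V in P) Rc [seq Xop phi gamma Lam (nth 0 w i) | i : 'I_n <- enum V].
  apply: eq_bigr => P /andP[hNC nP0]; rewrite /wt; apply: eq_bigr => V hV.
  rewrite NCpartE in hNC; move: hNC => /andP[hP _]; have /and3P[/eqP cov tI n0] := hP.
  have Vn0 : V != set0 by apply: contraNneq n0 => <-.
  have VnT : V != [set: 'I_n].
    apply/eqP => E; move/eqP: nP0; apply; apply/eqP; rewrite eqEsubset; apply/andP; split.
      apply/subsetP => W hW; rewrite inE.
      have /set0Pn[y yW] : W != set0 by apply: contraNneq n0 => <-.
      have yV : y \in V by rewrite E inE.
      by rewrite -E -(def_pblock tI hW yW) (def_pblock tI hV yV).
    by rewrite sub1set -E.
  rewrite (_ : [seq _ | i <- enum V] = map (Xop phi gamma Lam) (lst w V)); last first.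
    by rewrite /lst -map_comp.
  rewrite (IH #|V|) //.
  - rewrite -[X in (_ < X)%N](card_ord n) -cardsT; apply: proper_card; by rewrite properT.
  - by rewrite /lst size_map -cardE.
  - by rewrite card_gt0.
rewrite rest in key; move/addIr: key.
rewrite /wt !big_set1 /lst.
have Et : enum [set: 'I_n] = enum 'I_n by rewrite enum_setT enumT.
by rewrite Et enum_nth // (map_comp (Xop phi gamma Lam) (fun i : 'I_n => nth 0 w i)) enum_nth.
Qed.
Unset Implicit Arguments.

Theorem corollary3p8 (R : realType) (B : algType R[i]) (star : B -> B)
    (phi : B -> R[i]) (gamma : B -> B) (Lam : B -> B -> B) :
  is_star_algebra star ->
  star_linear_functional star phi ->
  star_linear_map star gamma ->
  star_linear_bimap star Lam ->
  positive_functional star phi ->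
  faithful_functional star phi ->
  completely_positive star (gp phi gamma) ->
  Lambda_symmetric_fun star Lam phi ->
  Lambda_symmetric star Lam gamma ->
  (forall b, gamma b = 0) ->
  forall Rc : seq (op B) -> R[i],
  free_cumulants (psi star phi gamma) Rc ->
  forall (u1 : B) (mid : seq B) (un : B),
    Rc [seq Xop phi gamma Lam u | u <- u1 :: rcons mid un] =
    psi star phi gamma
      (prod_op (aminus phi gamma u1 :: rcons [seq azero Lam u | u <- mid] (aplus un))).
Proof.
move=> _ [hphi _] _ [_ hLam _] _ _ _ _ _ g0 Rc hR u1 mid un.
rewrite psi_rhs (@main_ind _ _ star phi gamma Lam Rc hLam hphi g0 hR
   (size (u1 :: rcons mid un))) //.
have ne : rcons mid un != [::] by case: mid.
by rewrite Kw_cons // lfl_fold.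
Qed.
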